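(* Let $\phi\in C^3((0,\infty))$, $\eta=\phi'$ and $\hat\eta(r)=\eta(r)+2\eta(2r)$, and suppose there are constants $0<a_0<\tilde r_1<\tilde r_2<2a_0$ and $a_1>a_0$ such that: $\eta'(r)>0$ for $0<r<\tilde r_1$ and $\eta'(r)<0$ for $r>\tilde r_1$; $\eta''(r)<0$ for $0<r<\tilde r_2$ and $\eta''(r)>0$ for $r>\tilde r_2$; $\hat\eta(r)<0$ for $0<r<a_0$ and $\hat\eta(r)>0$ for $r>a_0$; $\hat\eta'(r)>0$ for $0<r<a_1$ and $\hat\eta'(r)<0$ for $r>a_1$. Let $N,K$ be positive integers with $K<N-1$ and define $\hat{\mathbf\Psi}^F:(0,\infty)^{2N+1}\to\mathbb R^{2N+1}$ by $\hat\psi^F_j(\mathbf r)=\eta(r_j)+2\eta(2r_j)$ for $-N\le j\le -K$ and for $K\le j\le N$, and $\hat\psi^F_j(\mathbf r)=\eta(r_j)+\eta(r_j+r_{j-1})+\eta(r_j+r_{j+1})+[2\eta(2r_K)-\eta(r_K+r_{K-1})-\eta(r_K+r_{K+1})]$ for $-K+1\le j\le K-1$. Suppose $r_L,r_U$ satisfy $\tilde r_2/2<r_L<r_U$ and $\eta'(r_U)+12\eta'(2r_L)\ge 0$. Then $r_U<a_1$, and the Jacobian matrix $D\hat{\mathbf\Psi}^F(\mathbf r)$ is strictly diagonally dominant for all $\mathbf r\in\Omega=(r_L,r_U)^{2N+1}$.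
   Context: A square matrix $(A_{ij})$ is strictly diagonally dominant if $|A_{ii}|>\sum_{j\ne i}|A_{ij}|$ for every row $i$. *)

(* Defs.v *)
From HB Require Import structures.
From mathcomp Require Import all_boot all_order all_algebra.
From mathcomp Require Import all_classical all_reals all_analysis.
Set Implicit Arguments. Unset Strict Implicit. Unset Printing Implicit Defensive.
Import Order.TTheory GRing.Theory Num.Theory.
Import numFieldNormedType.Exports.
Local Open Scope ring_scope.

Definition strictly_diag_dominant (R : numDomainType) (n : nat) (A : 'M[R]_n) :=
  forall i : 'I_n, \sum_(j < n | j != i) `|A i j| < `|A i i|.

(* Jacobian in the usual convention: entry (i, k) = d f_i / d x_k.
   (MathComp-Analysis' 'J f p = lin1_mx ('d f p) acts on row vectors, so its
   (k, i) entry is d f_i / d x_k; we transpose it.) *)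
Definition jac (R : numFieldType) (n m : nat) (f : 'rV[R]_n -> 'rV[R]_m)
  (p : 'rV[R]_n) : 'M[R]_(m, n) := ('J f p)^T.

(* Coordinates r_j, j = -N..N, are stored at position q = j + N in a row
   vector of size 2N+1.  [coord r q] reads position q (nat). *)
Definition coord (R : Type) (N : nat) (r : 'rV[R]_(N.*2.+1)) (q : nat) : R :=
  r ord0 (inord q).

Definition PsiF (R : ringType) (eta : R -> R) (N K : nat)
  (r : 'rV[R]_(N.*2.+1)) : 'rV[R]_(N.*2.+1) :=
  \row_(q < N.*2.+1)
    if (q <= N - K)%N || (N + K <= q)%N then
      eta (coord r q) + 2 * eta (2 * coord r q)
    else
      eta (coord r q) + eta (coord r q + coord r q.-1)
        + eta (coord r q + coord r q.+1)
        + (2 * eta (2 * coord r (N + K))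
           - eta (coord r (N + K) + coord r (N + K).-1)
           - eta (coord r (N + K) + coord r (N + K).+1)).

(* Main.v *)
Require Import Defs.
From HB Require Import structures.
From mathcomp Require Import all_boot all_order all_algebra.
From mathcomp Require Import all_classical all_reals all_analysis.
From mathcomp Require Import ring lra zify.
Import Order.TTheory GRing.Theory Num.Theory.
Import numFieldNormedType.Exports.
Local Open Scope ring_scope.
Local Open Scope classical_set_scope.

Section HD.
Variables (R : realType) (V : normedModType R).
Definition HD (f : V -> R) (x : V) (d : V -> R) :=
  differentiable f x /\ forall v, 'd f x v = d v.

Lemma HD_add f g x df dg : HD f x df -> HD g x dg ->
  HD (fun M => f M + g M) x (fun v => df v + dg v).
Proof.
move=> [f1 f2] [g1 g2]; split; first exact: (differentiableD f1 g1).
by move=> v; have := diffD f1 g1 => /(congr1 (fun h => h v)) /= ->; rewrite f2 g2.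
Qed.

Lemma HD_sub f g x df dg : HD f x df -> HD g x dg ->
  HD (fun M => f M - g M) x (fun v => df v - dg v).
Proof.
move=> [f1 f2] [g1 g2]; split; first exact: (differentiableB f1 g1).
by move=> v; have := diffB f1 g1 => /(congr1 (fun h => h v)) /= ->; rewrite f2 g2.
Qed.

Lemma HD_mulc (c : R) f x df : HD f x df ->
  HD (fun M => c * f M) x (fun v => c * df v).
Proof.
move=> [f1 f2]; split; first exact: (differentiableZ c f1).
by move=> v; have := diffZ c f1 => /(congr1 (fun h => h v)) /= ->; rewrite f2.
Qed.

Lemma HD_comp (e : R -> R) f x df : HD f x df -> differentiable e (f x) ->
  HD (fun M => e (f M)) x (fun v => df v * derive1 e (f x)).
Proof.
move=> [f1 f2] de; split; first exact: (differentiable_comp f1 de).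
move=> v; have := diff_comp f1 de => /(congr1 (fun h => h v)) /= ->.
by rewrite diff1E // f2.
Qed.

Lemma HD_lin (f : {linear V -> R}) x : continuous f -> HD f x f.
Proof. by move=> cf; split; [exact: linear_differentiable|rewrite diff_lin]. Qed.
End HD.
Arguments HD {R V}.

Lemma HD_id (R : realType) (x : R) : HD (fun t : R => t) x (fun t => t).
Proof. by apply: (@HD_lin _ _ idfun) => z; exact: cvg_id. Qed.

Lemma HD_coord (R : realType) n (j : 'I_n) (x : 'rV[R]_n) :
  HD (fun M : 'rV[R]_n => M ord0 j) x (fun v => v ord0 j).
Proof.
have lin : linear (fun M : 'rV[R]_n => M ord0 j).
  by move=> k u w; rewrite !mxE.
pose LM := GRing.isLinear.Build _ _ _ _ _ lin.
pose L : {linear 'rV[R]_n -> R} := HB.pack (fun M : 'rV[R]_n => M ord0 j) LM.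
exact: (@HD_lin _ _ L x (@coord_continuous _ _ _ _ _)).
Qed.
Lemma mvt_sign (R : realType) (f : R -> R) x y : x < y ->
  (forall z, x <= z <= y -> differentiable f z) ->
  exists2 c, x < c < y & f y - f x = derive1 f c * (y - x).
Proof.
move=> xy df.
have h1 : forall z, z \in `]x, y[%R -> is_derive z 1 f (derive1 f z).
  move=> z; rewrite in_itv /= => /andP[h1 h2].
  rewrite derive1E; apply: derivableP; apply: diff_derivable; apply: df.
  by rewrite !ltW.
have h2 : {within `[x, y], continuous f}.
  apply/continuous_in_subspaceT => z; rewrite inE /= in_itv /= => zin.
  by apply/differentiable_continuous; apply: df.
have [c cin E] := @MVT R f (derive1 f) x y xy h1 h2.
by exists c => //; move: cin; rewrite in_itv.
Qed.

Lemma mvt_dec (R : realType) (f : R -> R) x y : x < y ->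
  (forall z, x <= z <= y -> differentiable f z) ->
  (forall z, x < z < y -> derive1 f z < 0) -> f y < f x.
Proof.
move=> xy df dn; have [c cin E] := @mvt_sign R f x y xy df.
rewrite -subr_lt0 E pmulr_llt0 ?subr_gt0 //; exact: dn.
Qed.

Lemma mvt_inc (R : realType) (f : R -> R) x y : x < y ->
  (forall z, x <= z <= y -> differentiable f z) ->
  (forall z, x < z < y -> 0 < derive1 f z) -> f x < f y.
Proof.
move=> xy df dn; have [c cin E] := @mvt_sign R f x y xy df.
rewrite -subr_gt0 E pmulr_lgt0 ?subr_gt0 //; exact: dn.
Qed.

Lemma HD_c (R : realType) N (q : nat) (x : 'rV[R]_(N.*2.+1)) :
  HD (fun M : 'rV[R]_(N.*2.+1) => Defs.coord M q) x (fun v => Defs.coord v q).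
Proof. rewrite /Defs.coord; exact: HD_coord. Qed.

Lemma jacE (R : realType) n (f : 'rV[R]_n -> 'rV[R]_n) (r : 'rV[R]_n) i k :
  differentiable f r -> differentiable (fun M => f M ord0 i) r ->
  jac f r i k = 'd (fun M => f M ord0 i) r (delta_mx ord0 k).
Proof.
move=> df dfi; rewrite /jac /jacobian mxE /lin1_mx mxE -deriveE //.
rewrite -deriveE // derive_mx ?mxE //; exact: diff_derivable.
Qed.

Lemma diff_rows (R : realType) n (f : 'rV[R]_n -> 'rV[R]_n) (r : 'rV[R]_n) :
  (forall i, differentiable (fun M => f M ord0 i) r) -> differentiable f r.
Proof.
move=> H.
have -> : f = \sum_(j < n) (fun M => f M ord0 j *: delta_mx ord0 j).
  rewrite fct_sumE; apply/funext => M; exact: row_sum_delta.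
apply: differentiable_sum => j; exact: differentiableZl.
Qed.
Notation cd := Defs.coord.

Ltac hd_solve deta :=
  repeat first [ apply: HD_sub | apply: HD_add | apply: HD_mulc | apply: HD_c
               | apply: HD_id
               | (apply: HD_comp; last (apply: deta; rewrite /=))].

Lemma HD_rowB (R : realType) (eta : R -> R) (N : nat) (q : nat) (r : 'rV[R]_(N.*2.+1)) :
  (forall x : R, 0 < x -> differentiable eta x) -> (forall l, 0 < cd r l) ->
  HD (fun M : 'rV[R]_(N.*2.+1) => eta (cd M q) + 2 * eta (2 * cd M q)) r
     (fun v => cd v q * derive1 eta (cd r q)
               + 2 * ((2 * cd v q) * derive1 eta (2 * cd r q))).
Proof.
move=> deta pos; hd_solve deta; by rewrite ?mulr_gt0 ?addr_gt0.
Qed.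

Lemma HD_rowI (R : realType) (eta : R -> R) (N K : nat) (q : nat) (r : 'rV[R]_(N.*2.+1)) :
  (forall x : R, 0 < x -> differentiable eta x) -> (forall l, 0 < cd r l) ->
  HD (fun M : 'rV[R]_(N.*2.+1) => eta (cd M q) + eta (cd M q + cd M q.-1)
        + eta (cd M q + cd M q.+1)
        + (2 * eta (2 * cd M (N + K))
           - eta (cd M (N + K) + cd M (N + K).-1)
           - eta (cd M (N + K) + cd M (N + K).+1))) r
     (fun v => cd v q * derive1 eta (cd r q)
        + (cd v q + cd v q.-1) * derive1 eta (cd r q + cd r q.-1)
        + (cd v q + cd v q.+1) * derive1 eta (cd r q + cd r q.+1)
        + (2 * ((2 * cd v (N + K)) * derive1 eta (2 * cd r (N + K)))
           - (cd v (N + K) + cd v (N + K).-1) * derive1 eta (cd r (N + K) + cd r (N + K).-1)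
           - (cd v (N + K) + cd v (N + K).+1) * derive1 eta (cd r (N + K) + cd r (N + K).+1))).
Proof.
move=> deta pos; hd_solve deta; by rewrite ?mulr_gt0 ?addr_gt0.
Qed.

Lemma HD_etahat (R : realType) (eta : R -> R) (x : R) :
  (forall x : R, 0 < x -> differentiable eta x) -> 0 < x ->
  HD (fun t : R => eta t + 2 * eta (2 * t)) x
     (fun v => v * derive1 eta x + 2 * ((2 * v) * derive1 eta (2 * x))).
Proof.
move=> deta pos; apply: HD_add.
  have H := @HD_comp R _ eta _ x _ (HD_id R x) (deta _ pos). exact H.
hd_solve deta; by rewrite ?mulr_gt0 ?addr_gt0.
Qed.

Definition GB (R : realType) (eta : R -> R) (N : nat) (q : nat) (M : 'rV[R]_(N.*2.+1)) :=
  eta (cd M q) + 2 * eta (2 * cd M q).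
Definition GI (R : realType) (eta : R -> R) (N K : nat) (q : nat) (M : 'rV[R]_(N.*2.+1)) :=
  eta (cd M q) + eta (cd M q + cd M q.-1)
        + eta (cd M q + cd M q.+1)
        + (2 * eta (2 * cd M (N + K))
           - eta (cd M (N + K) + cd M (N + K).-1)
           - eta (cd M (N + K) + cd M (N + K).+1)).

Arguments GB {R}.
Arguments GI {R}.

Lemma rowE (R : realType) (eta : R -> R) (N K : nat) (q : 'I_(N.*2.+1)) :
  (fun M => @PsiF R eta N K M ord0 q) =
  if (q <= N - K)%N || (N + K <= q)%N then GB eta N q else GI eta N K q.
Proof.
apply/funext => M; rewrite mxE; by case: ifP.
Qed.

Lemma jacE' (R : realType) n (f : 'rV[R]_n -> 'rV[R]_n) (g : 'rV[R]_n -> R) (r : 'rV[R]_n) i k :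
  differentiable f r -> (fun M => f M ord0 i) = g -> differentiable g r ->
  jac f r i k = 'd g r (delta_mx ord0 k).
Proof. by move=> df E dg; rewrite -E; apply: jacE => //; rewrite E. Qed.

Lemma dl (R : realType) N (l : nat) (k : 'I_(N.*2.+1)) : (l < N.*2.+1)%N ->
  cd (delta_mx ord0 k : 'rV[R]_(N.*2.+1)) l = (l == k)%:R.
Proof.
move=> hl; rewrite /Defs.coord mxE eqxx /=; congr (_%:R).
case: (boolP (l == k)) => h.
  by rewrite (eqP h) inord_val eqxx.
case: eqP => // e; move/negP: h; case; by rewrite -e inordK.
Qed.

Lemma sum_delta (R : realType) n (l : nat) : (l < n)%N ->
  \sum_(k < n) ((l == k)%:R : R) = 1.
Proof.
move=> hl; rewrite (bigD1 (Ordinal hl)) //= eqxx big1 ?addr0 // => k hk.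
case: eqP => // e; exfalso; move/eqP: hk; apply; apply: val_inj; by rewrite /= e.
Qed.

Lemma part1 (R : realType) (D H : R -> R) rt1 rt2 a1 rL rU :
  0 < rt1 -> rt1 < rt2 -> rt2 < 2 * rL -> rL < rU ->
  (forall x y, rt2 <= x -> x < y -> D x < D y) ->
  (forall s, rt1 < s -> D s < 0) ->
  (forall x, 0 < x -> H x = D x + 4 * D (2 * x)) ->
  (forall r, a1 < r -> H r < 0) ->
  {for rU, continuous D} ->
  0 <= D rU + 12 * D (2 * rL) -> rU < a1.
Proof.
move=> rt1p h12 h2L hLU Dinc Dneg HE Hneg cD hc.
have rUp : 0 < rU by lra.
have d1 : D (2 * rL) < 0 by apply: Dneg; lra.
have d2 : D (2 * rL) < D (2 * rU) by apply: Dinc; lra.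
pose e := D rU + 4 * D (2 * rU).
have e0 : 0 < e by rewrite /e; lra.
have [d [d0 Hb]] : exists d : R, 0 < d /\ forall t : R, `|rU - t| < d -> `|D rU - D t| < e.
  move/cvgrPdist_lt : cD => /(_ e e0) /nbhs_ballP [d /= d0 Hb].
  by exists d; split => // t ht; apply: Hb.
pose t := rU + d / 2.
have ht : `|D rU - D t| < e.
  apply: Hb; rewrite /t opprD addrA subrr sub0r normrN gtr0_norm; lra.
have d3 : D (2 * rU) < D (2 * t) by apply: Dinc; rewrite /t; lra.
rewrite ltNge; apply/negP => ha.
have tp : 0 < t by rewrite /t; lra.
have a1t : a1 < t by rewrite /t; lra.
have := Hneg t a1t; rewrite HE //.
move: ht; rewrite /e => ht.
have := ler_norm (D rU - D t).
lra.
Qed.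

Lemma offdiag_bound (R : realType) (m x A B C T1 T2 a b c d e : R) :
  0 <= a -> 0 <= b -> 0 <= c -> 0 <= d -> 0 <= e ->
  `|A| <= m -> `|B| <= m -> `|C| <= m -> `|T1| <= m -> `|T2| <= m ->
  `|0 * x + (0 + a) * A + (0 + b) * B
     + (2 * ((2 * c) * C) - (c + d) * T1 - (c + e) * T2)|
  <= a * m + b * m + c * (6 * m) + d * m + e * m.
Proof.
move=> a0 b0 c0 d0 e0 /ler_normlP [hA1 hA2] /ler_normlP [hB1 hB2]
  /ler_normlP [hC1 hC2] /ler_normlP [hT1 hT2] /ler_normlP [hU1 hU2].
apply/ler_normlP; split; nra.
Qed.

Lemma diag_bound (R : realType) (m P X A B C T1 T2 : R) (b : bool) :
  0 < m -> 12 * m <= P -> P < X -> - m < A -> - m < B -> (b -> T1 = B) ->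
  10 * m < `|1 * X + (1 + 0) * A + (1 + 0) * B
     + (2 * ((2 * 0) * C) - (0 + b%:R) * T1 - (0 + 0) * T2)|.
Proof.
move=> m0 hP hX hA hB hb; case: b hb => [/(_ isT) ->|_] /=.
  rewrite ger0_norm; lra.
rewrite ger0_norm; lra.
Qed.

Lemma Dfacts (R : realType) (D : R -> R) rt1 rt2 rL rU :
  0 < rt1 -> rt1 < rt2 -> rt2 < 2 * rL -> rL < rU ->
  (forall x y, rt2 <= x -> x < y -> D x < D y) ->
  (forall x y, 0 < x -> x < y -> y <= rt2 -> D y < D x) ->
  (forall s, rt1 < s -> D s < 0) ->
  0 <= D rU + 12 * D (2 * rL) ->
  [/\ 0 < - D (2 * rL), (forall s, 2 * rL < s -> - (- D (2 * rL)) < D s),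
      (forall s, 2 * rL <= s -> `|D s| <= - D (2 * rL)),
      12 * (- D (2 * rL)) <= D rU &
      (forall x, 0 < x -> x < rU -> D rU < D x)].
Proof.
move=> rt1p h12 h2L hLU Dinc Ddec Dneg hc.
have d1 : D (2 * rL) < 0 by apply: Dneg; lra.
have Psum : forall s, 2 * rL < s -> D (2 * rL) < D s < 0.
  move=> s hs; rewrite Dneg ?andbT; last lra.
  by apply: Dinc => //; lra.
have rUrt1 : rU <= rt1.
  rewrite leNgt; apply/negP => h; have := Dneg _ h; lra.
split.
- lra.
- by move=> s hs; have /andP[h1 h2] := Psum s hs; lra.
- move=> s; rewrite le_eqVlt => /orP[/eqP <-|hs].
    rewrite ltr0_norm //.
  have /andP[h1 h2] := Psum s hs; rewrite ltr0_norm //; lra.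
- lra.
- by move=> x x0 xU; apply: Ddec => //; lra.
Qed.

Lemma ring_fact (R : realType) (a b : R) : 1 * a + 2 * ((2 * 1) * b) = a + 4 * b.
Proof. ring. Qed.

Lemma zero_fact (R : realType) (a b : R) : `|(false%:R) * a + 2 * ((2 * false%:R) * b)| = 0.
Proof. by rewrite /= mulr0n !(mul0r, mulr0) addr0 normr0. Qed.

Lemma one_fact (R : realType) (a b : R) : (true%:R) * a + 2 * ((2 * true%:R) * b) = a + 4 * b.
Proof. rewrite /= mulr1n; ring. Qed.

Lemma ten_fact (R : realType) (m : R) : 1 * m + 1 * m + 1 * (6 * m) + 1 * m + 1 * m = 10 * m.
Proof. ring. Qed.

Lemma diag_bound' (R : realType) (m P X A B C T1 T2 : R) (b : bool) :
  0 < m -> 12 * m <= P -> P < X -> - m < A -> - m < B -> (b -> T1 = B) ->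
  10 * m < `|true%:R * X + (true%:R + false%:R) * A + (true%:R + false%:R) * B
     + (2 * ((2 * false%:R) * C) - (false%:R + b%:R) * T1 - (false%:R + false%:R) * T2)|.
Proof. exact: diag_bound. Qed.

Lemma offdiag_bound' (R : realType) (m x A B C T1 T2 a b c d e : R) :
  0 <= a -> 0 <= b -> 0 <= c -> 0 <= d -> 0 <= e ->
  `|A| <= m -> `|B| <= m -> `|C| <= m -> `|T1| <= m -> `|T2| <= m ->
  `|false%:R * x + (false%:R + a) * A + (false%:R + b) * B
     + (2 * ((2 * c) * C) - (c + d) * T1 - (c + e) * T2)|
  <= a * m + b * m + c * (6 * m) + d * m + e * m.
Proof. exact: offdiag_bound. Qed.

Theorem lemma4p4 (R : realType) (phi : R -> R)
  (a0 rt1 rt2 a1 : R) (N K : nat) (rL rU : R) :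
  (* phi in C^3((0,oo)) *)
  (forall x : R, 0 < x ->
     [/\ derivable phi x 1, derivable (derive1 phi) x 1 & derivable (derive1n 2 phi) x 1]) ->
  (forall x : R, 0 < x -> {for x, continuous (derive1n 3 phi)}) ->
  let eta : R -> R := derive1 phi in
  let etahat : R -> R := fun r : R => eta r + 2 * eta (2 * r) in
  0 < a0 -> a0 < rt1 -> rt1 < rt2 -> rt2 < 2 * a0 -> a0 < a1 ->
  (forall r, 0 < r -> r < rt1 -> 0 < derive1 eta r) ->
  (forall r, rt1 < r -> derive1 eta r < 0) ->
  (forall r, 0 < r -> r < rt2 -> derive1n 2 eta r < 0) ->
  (forall r, rt2 < r -> 0 < derive1n 2 eta r) ->
  (forall r, 0 < r -> r < a0 -> etahat r < 0) ->
  (forall r, a0 < r -> 0 < etahat r) ->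
  (forall r, 0 < r -> r < a1 -> 0 < derive1 etahat r) ->
  (forall r, a1 < r -> derive1 etahat r < 0) ->
  (0 < N)%N -> (0 < K)%N -> (K < N - 1)%N ->
  rt2 / 2 < rL -> rL < rU ->
  0 <= derive1 eta rU + 12 * derive1 eta (2 * rL) ->
  rU < a1 /\
  (forall r : 'rV[R]_(N.*2.+1),
     (forall q, rL < r ord0 q < rU) ->
     strictly_diag_dominant (jac (@PsiF R eta N K) r)).
Proof.
move=> Hd Hc eta etahat ha0 ha0rt1 hrt12 hrt2a0 ha0a1 HD1 HD1' HD2 HD2' He1 He2
  Hh1 Hh2 hN hK hKN hrL hLU hcond.
have deta : forall x : R, 0 < x -> differentiable eta x.
  by move=> x x0; apply/derivable1_diffP; case: (Hd x x0) => _ h _; exact: h.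
pose D := derive1 eta.
have dD : forall x : R, 0 < x -> differentiable D x.
  by move=> x x0; apply/derivable1_diffP; case: (Hd x x0) => _ _ h; exact: h.
have rt1p : 0 < rt1 by clear -ha0 ha0rt1; lra.
have rt2p : 0 < rt2 by clear -rt1p hrt12; lra.
have rLp : 0 < rL by clear -rt2p hrL; lra.
have h2rL : rt2 < 2 * rL by clear -hrL; lra.
have Dinc : forall x y, rt2 <= x -> x < y -> D x < D y.
  move=> x y hx xy; apply: mvt_inc => // z /andP[z1 z2].
    by apply: dD; clear -rt2p hx z1; lra.
  by apply: HD2'; clear -hx z1; lra.
have Ddec : forall x y, 0 < x -> x < y -> y <= rt2 -> D y < D x.
  move=> x y hx xy hy; apply: mvt_dec => // z /andP[z1 z2].
    by apply: dD; clear -hx z1; lra.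
  by apply: HD2; clear -hx z1 z2 hy; lra.
have Dneg : forall s, rt1 < s -> D s < 0 := HD1'.
have [mpos Psum Dm P12 Dlow] := @Dfacts R D rt1 rt2 rL rU rt1p hrt12 h2rL hLU Dinc Ddec Dneg hcond.
have etahatE : forall x, 0 < x -> derive1 etahat x = D x + 4 * D (2 * x).
  move=> x x0; have [h1 h2] := @HD_etahat R eta x deta x0.
  rewrite derive1E' // h2; exact: ring_fact.
have rUp : 0 < rU by clear -rLp hLU; lra.
have rUa1 : rU < a1.
  apply: (@part1 R D (derive1 etahat) rt1 rt2 a1 rL rU) => //.
  exact: differentiable_continuous (dD _ rUp).
split => //.
move=> r hr; rewrite /strictly_diag_dominant => i.
have bnd : forall l, rL < cd r l < rU by move=> l; exact: hr.
have pos : forall l, 0 < cd r l.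
  by move=> l; have /andP[h _] := bnd l; exact: lt_trans rLp h.
have dG : forall q : 'I_(N.*2.+1), differentiable (fun M => @PsiF R eta N K M ord0 q) r.
  move=> q; rewrite rowE; case: ifP => _.
    exact: (@HD_rowB R eta N q r deta pos).1.
  exact: (@HD_rowI R eta N K q r deta pos).1.
have dP : differentiable (@PsiF R eta N K) r by apply: diff_rows.
case hc : ((i <= N - K) || (N + K <= i))%N.
  have [hd1 hd2] := @HD_rowB R eta N i r deta pos.
  have JB : forall k, jac (@PsiF R eta N K) r i k =
     cd (delta_mx ord0 k : 'rV[R]_(N.*2.+1)) i * D (cd r i)
     + 2 * ((2 * cd (delta_mx ord0 k : 'rV[R]_(N.*2.+1)) i) * D (2 * cd r i)).
    move=> k; rewrite (@jacE' R _ _ (GB eta N i) r i k dP).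
    - exact: hd2.
    - by rewrite rowE hc.
    - exact: hd1.
  have hik : forall k : 'I_(N.*2.+1), k != i -> (nat_of_ord i == nat_of_ord k) = false.
    by move=> k; rewrite eq_sym => /negbTE.
  under eq_bigr => k hk do rewrite JB (@dl R N i k (ltn_ord i)) (hik k hk) zero_fact.
  rewrite big1 // JB (@dl R N i i (ltn_ord i)) eqxx one_fact -etahatE //.
  have /andP[h1 h2] := bnd i.
  rewrite gtr0_norm; apply: Hh1 => //; exact: lt_trans h2 rUa1.
have [hi1 hi2] : (N - K < i)%N /\ (i < N + K)%N.
  by move/negbT: hc; rewrite negb_or -!ltnNge => /andP[].
have hn : N.*2.+1 = (N + N).+1 by rewrite addnn.
have b0 : (i.-1 < N.*2.+1)%N by clear -hi1 hi2 hKN hN hK; lia.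
have b1 : (i.+1 < N.*2.+1)%N by clear -hi1 hi2 hKN hN hK; lia.
have b2 : (N + K < N.*2.+1)%N by clear -hi1 hi2 hKN hN hK; lia.
have b3 : ((N + K).-1 < N.*2.+1)%N by clear -hi1 hi2 hKN hN hK; lia.
have b4 : ((N + K).+1 < N.*2.+1)%N by clear -hi1 hi2 hKN hN hK; lia.
have [hd1 hd2] := @HD_rowI R eta N K i r deta pos.
have JI : forall k, jac (@PsiF R eta N K) r i k =
  let v := (delta_mx ord0 k : 'rV[R]_(N.*2.+1)) in
  cd v i * derive1 eta (cd r i)
        + (cd v i + cd v i.-1) * derive1 eta (cd r i + cd r i.-1)
        + (cd v i + cd v i.+1) * derive1 eta (cd r i + cd r i.+1)
        + (2 * ((2 * cd v (N + K)) * derive1 eta (2 * cd r (N + K)))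
           - (cd v (N + K) + cd v (N + K).-1) * derive1 eta (cd r (N + K) + cd r (N + K).-1)
           - (cd v (N + K) + cd v (N + K).+1) * derive1 eta (cd r (N + K) + cd r (N + K).+1)).
  move=> k; rewrite (@jacE' R _ _ (GI eta N K i) r i k dP).
  - exact: hd2.
  - by rewrite rowE hc.
  - exact: hd1.
have d0 := fun k => @dl R N i k (ltn_ord i).
have d1 := fun k => @dl R N i.-1 k b0.
have d2 := fun k => @dl R N i.+1 k b1.
have d3 := fun k => @dl R N (N + K) k b2.
have d4 := fun k => @dl R N (N + K).-1 k b3.
have d5 := fun k => @dl R N (N + K).+1 k b4.
have hik : forall k : 'I_(N.*2.+1), k != i -> (nat_of_ord i == nat_of_ord k) = false.
  by move=> k; rewrite eq_sym => /negbTE.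
have S2 : forall a b : R, rL < a < rU -> rL < b < rU -> 2 * rL <= a + b.
  by move=> a b /andP[xa1 xa2] /andP[xb1 xb2]; clear -xa1 xb1; lra.
have S2s : forall a b : R, rL < a < rU -> rL < b < rU -> 2 * rL < a + b.
  by move=> a b /andP[xa1 xa2] /andP[xb1 xb2]; clear -xa1 xb1; lra.
have S1 : forall a : R, rL < a < rU -> 2 * rL <= 2 * a.
  by move=> a /andP[xa1 xa2]; clear -xa1; lra.
have hA := Dm _ (S2 _ _ (bnd i) (bnd i.-1)).
have hB := Dm _ (S2 _ _ (bnd i) (bnd i.+1)).
have hC := Dm _ (S1 _ (bnd (N + K))).
have hT1 := Dm _ (S2 _ _ (bnd (N + K)) (bnd (N + K).-1)).
have hT2 := Dm _ (S2 _ _ (bnd (N + K)) (bnd (N + K).+1)).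
pose m := - D (2 * rL).
pose F := fun k : 'I_(N.*2.+1) => (i.-1 == k)%:R * m + (i.+1 == k)%:R * m
   + ((N + K) == k)%:R * (6 * m) + ((N + K).-1 == k)%:R * m + ((N + K).+1 == k)%:R * m.
have offb : forall k, k != i -> `|jac (@PsiF R eta N K) r i k| <= F k.
  move=> k hk; rewrite JI; cbv zeta.
  rewrite d0 d1 d2 d3 d4 d5 (hik k hk).
  rewrite /F; apply: offdiag_bound'; [exact: ler0n|exact: ler0n|exact: ler0n|exact: ler0n|exact: ler0n|exact: hA|exact: hB|exact: hC|exact: hT1|exact: hT2].
apply: (le_lt_trans (ler_sum _ offb)).
have mge : 0 <= m by exact: ltW.
have Fge : forall k, 0 <= F k.
  by move=> k; rewrite /F !addr_ge0 // mulr_ge0 // ?ler0n // mulr_ge0.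
have sumF : \sum_(k < N.*2.+1) F k = 10 * m.
  rewrite /F !big_split /= -!mulr_suml !sum_delta //; exact: ten_fact.
apply: (@le_lt_trans _ _ (10 * m)).
  rewrite -sumF [X in _ <= X](bigD1 i) //= lerDr; exact: Fge.
rewrite JI; cbv zeta; rewrite d0 d1 d2 d3 d4 d5 eqxx.
have h10 : (i.-1 == i) = false by apply/negbTE/eqP; clear -hi1 hi2 hKN hN hK; lia.
have h11 : (i.+1 == i) = false by apply/negbTE/eqP; clear -hi1 hi2 hKN hN hK; lia.
have h12 : ((N + K) == i) = false by apply/negbTE/eqP; clear -hi1 hi2 hKN hN hK; lia.
have h13 : ((N + K).+1 == i) = false by apply/negbTE/eqP; clear -hi1 hi2 hKN hN hK; lia.
rewrite h10 h11 h12 h13.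
have /andP[ri1 ri2] := bnd i.
apply: (@diag_bound' R m (D rU)).
- exact: mpos.
- exact: P12.
- by apply: Dlow => //; exact: pos.
- exact: (Psum _ (S2s _ _ (bnd i) (bnd i.-1))).
- exact: (Psum _ (S2s _ _ (bnd i) (bnd i.+1))).
- move/eqP => e.
  have e2 : (N + K)%N = i.+1 by clear -e hN hK; lia.
  by rewrite e2 /= addrC.
Qed.
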